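(* Let $m\ge2$ be an integer and let $g\in C^\infty(\mathbb{R})$ with $g(0)>0$. Let $\tilde g\in C^\infty(\mathbb{R})$ satisfy, for some $0<\delta<1$: $\tilde g(x)=g(x)$ for $|x|\le\delta$, $\tilde g(x)=\frac9{10}g(0)$ for $|x|\ge1$, and $0\le -x\tilde g'(x)<\frac15 g(0)$, $|x^2\tilde g''(x)|<\frac15g(0)$ for all $x\in\mathbb{R}$; and suppose $\frac9{10}g(0)\le\tilde g\le g(0)$ on $\mathbb{R}$. Put $\hat g=\tilde g/g(0)$ and $p(s,\tilde X)=\hat g(\tilde Xs)s^{2m}-s$. Then there is a function $\alpha\in C^\infty([0,\infty))$ such that for all $\tilde X\ge0$, $$\frac{\partial p}{\partial s}(\alpha(\tilde X),\tilde X)=0\quad\text{and}\quad \alpha_0\le\alpha(\tilde X)\le\alpha_1,$$ where $\alpha_0=(2m)^{-\frac1{2m-1}}$ and $\alpha_1=(\tfrac45\cdot 2m)^{-\frac1{2m-1}}$. *)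

(* Defs.v *)
From Stdlib Require Import Reals Lra.
From Coquelicot Require Import Coquelicot.
Open Scope R_scope.

Definition smooth (f : R -> R) : Prop :=
  forall (n : nat) (x : R), ex_derive_n f n x.

(* f is C^infinity on [0, +oo): it is smooth on an open neighbourhood (-eps, +oo)
   of [0, +oo) (equivalently, by Seeley's extension theorem, all one-sided
   derivatives exist and are continuous up to 0). *)
Definition smooth_on_nonneg (f : R -> R) : Prop :=
  exists eps : R, 0 < eps /\ forall (n : nat) (x : R), - eps < x -> ex_derive_n f n x.

Definition ghat (g gt : R -> R) (x : R) : R := gt x / g 0.

Definition pfun (m : nat) (g gt : R -> R) (s X : R) : R :=
  ghat g gt (X * s) * s ^ (2 * m) - s.

Definition alpha0 (m : nat) : R := Rpower (2 * INR m) (- (1 / (2 * INR m - 1))).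
Definition alpha1 (m : nat) : R :=
  Rpower (4 / 5 * (2 * INR m)) (- (1 / (2 * INR m - 1))).

(* Main.v *)
Require Import Defs.
From Stdlib Require Import Reals Lra Lia FunctionalExtensionality.
From Coquelicot Require Import Coquelicot.
Open Scope R_scope.


Fixpoint Sm (n : nat) (f : R -> R) : Prop :=
  match n with O => True | S n => (forall x, ex_derive f x) /\ Sm n (Derive f) end.

Lemma Sm_S n f : Sm (S n) f -> Sm n f.
Proof.
  revert f; induction n; intros f H; simpl in *; auto.
  destruct H as [H1 H2]; split; auto.
Qed.

Lemma Sm_ext n f g : (forall x, f x = g x) -> Sm n f -> Sm n g.
Proof. intros H; replace g with f; auto; apply functional_extensionality; auto. Qed.

Lemma Sm_const n c : Sm n (fun _ => c).
Proof.
  revert c; induction n; intros c; simpl; auto. split. intros; apply ex_derive_const.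
  apply Sm_ext with (fun _ => 0); auto. intros; rewrite Derive_const; auto.
Qed.

Lemma Sm_id n : Sm n (fun x => x).
Proof.
  destruct n; simpl; auto. split. intros; apply ex_derive_id.
  apply Sm_ext with (fun _ => 1). intros; rewrite Derive_id; auto. apply Sm_const.
Qed.

Lemma Sm_plus n f g : Sm n f -> Sm n g -> Sm n (fun x => f x + g x).
Proof.
  revert f g; induction n; intros f g Hf Hg; simpl in *; auto.
  destruct Hf as [F1 F2], Hg as [G1 G2]; split.
  intros; apply (ex_derive_plus f g); auto.
  apply Sm_ext with (fun x => Derive f x + Derive g x).
  intros; rewrite Derive_plus; auto. auto.
Qed.

Lemma Sm_mult n f g : Sm n f -> Sm n g -> Sm n (fun x => f x * g x).
Proof.
  revert f g; induction n; intros f g Hf Hg; simpl; auto.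
  pose proof (Sm_S _ _ Hf) as Hf'; pose proof (Sm_S _ _ Hg) as Hg'.
  destruct Hf as [F1 F2], Hg as [G1 G2]; split.
  intros; apply (ex_derive_mult f g); auto.
  apply Sm_ext with (fun x => Derive f x * g x + f x * Derive g x).
  intros; rewrite Derive_mult; auto. apply Sm_plus; auto.
Qed.

Lemma Sm_comp n f u : Sm n f -> Sm n u -> Sm n (fun x => f (u x)).
Proof.
  revert f u; induction n; intros f u Hf Hu; simpl; auto.
  pose proof (Sm_S _ _ Hu) as Hu'.
  destruct Hf as [F1 F2], Hu as [U1 U2]; split.
  intros; apply (ex_derive_comp f u); auto.
  apply Sm_ext with (fun x => Derive f (u x) * Derive u x).
  intros; rewrite (Derive_comp f u); auto; ring. apply Sm_mult; auto.
Qed.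

Lemma Sm_exp n : Sm n exp.
Proof.
  induction n; simpl; auto. split.
  intros; auto_derive; auto.
  apply Sm_ext with exp; auto. intros; apply sym_eq, is_derive_unique.
  apply (is_derive_ext (fun x => exp x)); auto. intros; auto_derive; auto; ring.
Qed.

Lemma Sm_inv n h : (forall x, h x <> 0) -> Sm n h -> Sm n (fun x => / h x).
Proof.
  intros Hnz; revert h Hnz; induction n; intros h Hnz Hh; simpl; auto.
  pose proof (Sm_S _ _ Hh) as Hh'.
  destruct Hh as [H1 H2]; split.
  intros; apply (ex_derive_inv h); auto.
  apply Sm_ext with (fun x => (-1) * Derive h x * (/ h x * / h x)).
  intros; rewrite Derive_inv; auto. field; auto.
  apply Sm_mult; [apply Sm_mult|apply Sm_mult]; auto using Sm_const.
Qed.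

Lemma Sm_ln n h : (forall x, 0 < h x) -> Sm n h -> Sm n (fun x => ln (h x)).
Proof.
  intros Hp Hh; destruct n; simpl; auto.
  pose proof (Sm_S _ _ Hh) as Hh'.
  destruct Hh as [H1 H2]; split.
  intros; auto_derive; auto.
  apply Sm_ext with (fun x => Derive h x * / h x).
  intros; apply sym_eq, is_derive_unique. auto_derive; [repeat split; auto | rewrite Rmult_1_l; reflexivity].
  apply Sm_mult; auto. apply Sm_inv; auto. intros x; apply Rgt_not_eq, Hp.
Qed.

Lemma Sm_ex n f : Sm n f -> forall x, ex_derive_n f n x.
Proof.
  revert f; induction n; intros f H x; simpl; auto.
  destruct H as [H1 H2]. destruct n. simpl. apply H1.
  apply ex_derive_ext with (Derive_n (Derive f) n).
  intros t. pose proof (Derive_n_comp f n 1 t) as E; rewrite Nat.add_1_r in E; exact E.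
  apply (IHn _ H2 x).
Qed.

Lemma ex_Sm f : (forall n x, ex_derive_n f n x) -> forall n, Sm n f.
Proof.
  intros H n; revert f H; induction n; intros f H; simpl; auto. split.
  intros x; apply (H 1%nat x).
  apply IHn. intros k x; destruct k; simpl; auto.
  apply ex_derive_ext with (Derive_n f (S k)).
  intros t. pose proof (Derive_n_comp f k 1 t) as E; rewrite Nat.add_1_r in E; symmetry; exact E.
  apply (H (S (S k)) x).
Qed.


Lemma inv_smooth (f g : R -> R) :
  (forall n, Sm n f) -> (forall x, 0 < Derive f x) ->
  (forall x y, x < y -> f x < f y) -> (forall X, f (g X) = X) ->
  forall n, Sm n g.
Proof.
  intros Hf Hpos Hinc Hfg.
  assert (Hex : forall x, ex_derive f x) by (apply (proj1 (Hf 1%nat))).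
  assert (Hmono : forall x y, x <= y -> g x <= g y).
  { intros x y Hxy. destruct (Rle_or_lt (g x) (g y)) as [h|h]; auto.
    apply Hinc in h. rewrite !Hfg in h. lra. }
  assert (Hcont : forall X, continuity_pt g X).
  { intros X.
    apply (Ranalysis5.continuity_pt_recip_interv f g (g X - 1) (g X + 1)).
    - lra.
    - intros; apply Hinc; lra.
    - intros; unfold comp, id; apply Hfg.
    - intros x H1 H2. split.
      + destruct (Rle_or_lt (g X - 1) (g x)) as [h|h]; auto.
        apply Hinc in h. rewrite Hfg in h. lra.
      + destruct (Rle_or_lt (g x) (g X + 1)) as [h|h]; auto.
        apply Hinc in h. rewrite Hfg in h. lra.
    - intros a _. apply derivable_continuous_pt, ex_derive_Reals_0, Hex.
    - split; [ rewrite <- (Hfg X) at 2 | rewrite <- (Hfg X) at 1 ]; apply Hinc; lra. }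
  assert (Hder : forall X, is_derive g X (/ Derive f (g X))).
  { intros X. apply is_derive_Reals.
    assert (Prf : forall a, g (X - 1) <= a <= g (X + 1) -> derivable_pt f a).
    { intros a _; apply ex_derive_Reals_0, Hex. }
    assert (Hi : g (X - 1) <= g X <= g (X + 1)) by (split; apply Hmono; lra).
    pose proof (Ranalysis5.derivable_pt_lim_recip_interv f g (X - 1) (X + 1) X Prf (Hcont X)
       ltac:(lra) ltac:(lra) Hi (fun x0 _ => Hfg x0)) as H.
    rewrite Derive_Reals in H. specialize (H (Rgt_not_eq _ _ (Hpos _))).
    replace (/ Derive f (g X)) with (1 / Derive f (g X)) by (field; apply Rgt_not_eq, Hpos).
    exact H. }
  induction n; simpl; auto.
  split. intros X; eexists; apply Hder.
  apply Sm_ext with (fun X => / Derive f (g X)).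
  intros X; symmetry; apply is_derive_unique, Hder.
  apply (Sm_comp n (fun u => / Derive f u) g); auto.
  apply Sm_inv. intros; apply Rgt_not_eq, Hpos.
  apply (proj2 (Hf (S n))).
Qed.


Lemma exp_le' x y : x <= y -> exp x <= exp y.
Proof. intros [h|h]; [apply Rlt_le, exp_increasing; auto | subst; lra]. Qed.

Lemma ln_le' x y : 0 < x -> x <= y -> ln x <= ln y.
Proof. intros hx [h|h]; [apply Rlt_le, ln_increasing; auto | subst; lra]. Qed.

Theorem lemma6p6 (m : nat) (g gt : R -> R) (delta : R) :
  (2 <= m)%nat ->
  smooth g -> 0 < g 0 ->
  smooth gt ->
  0 < delta < 1 ->
  (forall x, Rabs x <= delta -> gt x = g x) ->
  (forall x, 1 <= Rabs x -> gt x = 9 / 10 * g 0) ->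
  (forall x, 0 <= - x * Derive gt x /\ - x * Derive gt x < 1 / 5 * g 0) ->
  (forall x, Rabs (x ^ 2 * Derive_n gt 2 x) < 1 / 5 * g 0) ->
  (forall x, 9 / 10 * g 0 <= gt x /\ gt x <= g 0) ->
  exists alpha : R -> R,
    smooth_on_nonneg alpha /\
    forall X : R, 0 <= X ->
      Derive (fun s => pfun m g gt s X) (alpha X) = 0 /\
      alpha0 m <= alpha X <= alpha1 m.
Proof.
  intros Hm _ HG Hsgt _ _ _ Hd1 Hd2 Hb.
  set (G := g 0) in *.
  set (M := INR m) in *.
  assert (HM : 2 <= M) by (unfold M; apply (le_INR 2 m) in Hm; simpl in Hm; lra).
  pose (k := fun u => u * Derive gt u / G + 2 * M * (gt u / G)).
  assert (Hk : forall u, 4 / 5 * (2 * M) <= k u <= 2 * M).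
  { intros u. unfold k. destruct (Hd1 u) as [h1 h2]. destruct (Hb u) as [h3 h4].
    assert (e1 : u * Derive gt u / G <= 0).
    { unfold Rdiv. apply Rmult_le_0_r; [lra | apply Rlt_le, Rinv_0_lt_compat; lra]. }
    assert (e2 : - (1/5) < u * Derive gt u / G).
    { apply Rmult_lt_reg_r with G; auto.
      replace (u * Derive gt u / G * G) with (u * Derive gt u) by (field; lra). lra. }
    assert (e3 : 9/10 <= gt u / G <= 1).
    { split; [apply Rmult_le_reg_r with G | apply Rmult_le_reg_r with G]; auto;
      replace (gt u / G * G) with (gt u) by (field; lra); lra. }
    nra. }
  assert (Hkp : forall u, 0 < k u) by (intros u; specialize (Hk u); lra).
  assert (HSgt : forall n, Sm n gt) by (apply ex_Sm, Hsgt).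
  assert (HSdgt : forall n, Sm n (Derive gt)) by (intros n; apply (proj2 (HSgt (S n)))).
  assert (HSk : forall n, Sm n k).
  { intros n. unfold k.
    apply Sm_ext with (fun u => (u * Derive gt u) * / G + (2 * M) * (gt u * / G)).
    intros; unfold Rdiv; ring.
    apply Sm_plus; apply Sm_mult; try apply Sm_const; try apply Sm_mult; auto using Sm_id, Sm_const. }
  pose (c := 1 / (2 * M - 1)).
  assert (Hc : 0 < c) by (unfold c; apply Rdiv_lt_0_compat; lra).
  pose (psi := fun u => u * exp (c * ln (k u))).
  pose (phi := fun u => exp (- c * ln (k u))).
  assert (HSpsi : forall n, Sm n psi).
  { intros n; unfold psi. apply Sm_mult. apply Sm_id.
    apply (Sm_comp n exp (fun u => c * ln (k u))). apply Sm_exp.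
    apply Sm_mult. apply Sm_const. apply Sm_ln; auto. }
  assert (HSphi : forall n, Sm n phi).
  { intros n; unfold phi.
    apply (Sm_comp n exp (fun u => - c * ln (k u))). apply Sm_exp.
    apply Sm_mult. apply Sm_const. apply Sm_ln; auto. }
  assert (Hdpsi : forall u, 0 < Derive psi u).
  { intros u.
    assert (Hex1 : ex_derive gt u) by (apply (proj1 (HSgt 1%nat))).
    assert (Hex2 : ex_derive (Derive gt) u) by (apply (proj1 (HSdgt 1%nat))).
    pose (Dk := (Derive gt u + u * Derive (Derive gt) u) / G + 2 * M * (Derive gt u / G)).
    assert (E : Derive psi u = exp (c * ln (k u)) * (1 + u * c * Dk / k u)).
    { apply is_derive_unique. unfold psi, k. auto_derive.
      - repeat split; auto. specialize (Hkp u). unfold k in Hkp. unfold Rdiv in Hkp. exact Hkp.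
      - unfold Dk, k. change (Derive (fun x => Derive gt x)) with (Derive (Derive gt)). change (Derive (fun x => gt x)) with (Derive gt). unfold Rdiv. field. split; [lra|]. destruct (Hd1 u), (Hb u). apply Rgt_not_eq. assert (0 <= (M - 2) * gt u) by (apply Rmult_le_pos; lra). lra. }
    rewrite E. apply Rmult_lt_0_compat; [apply exp_pos|].
    set (A := u * Derive gt u). set (B := u ^ 2 * Derive (Derive gt) u). set (q := gt u).
    assert (E2 : (2 * M - 1) * k u + u * Dk = (4 * M * A + 2 * M * (2 * M - 1) * q + B) / G).
    { unfold Dk, k, A, B, q. field. lra. }
    assert (hA : - (1/5) * G < A <= 0) by (destruct (Hd1 u); unfold A; lra).
    assert (hB : - (1/5) * G < B).
    { pose proof (Hd2 u) as h; apply Rabs_def2 in h.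
      change (Derive_n gt 2 u) with (Derive (Derive gt) u) in h. unfold B; lra. }
    assert (hq : 9/10 * G <= q) by (destruct (Hb u); unfold q; lra).
    assert (N : 0 < 4 * M * A + 2 * M * (2 * M - 1) * q + B).
    { assert (4 * M * A >= 4 * M * (- (1/5) * G)) by nra.
      assert (2 * M * (2 * M - 1) * q >= 2 * M * (2 * M - 1) * (9/10 * G)).
      { apply Rle_ge, Rmult_le_compat_l; [nra|lra]. }
      assert (0 < G * (36/10 * M ^ 2 - 26/10 * M - 2/10)) by (apply Rmult_lt_0_compat; nra).
      lra. }
    assert (P : 0 < (2 * M - 1) * k u + u * Dk).
    { rewrite E2. apply Rdiv_lt_0_compat; lra. }
    replace (1 + u * c * Dk / k u) with (c * ((2 * M - 1) * k u + u * Dk) / k u).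
    apply Rdiv_lt_0_compat; auto. apply Rmult_lt_0_compat; auto.
    unfold c. field. split; [lra | specialize (Hkp u); lra]. }
  assert (Hexpsi : forall u, ex_derive psi u) by (apply (proj1 (HSpsi 1%nat))).
  assert (Hinc : forall x y, x < y -> psi x < psi y).
  { intros x y Hxy.
    destruct (MVT_cor2 psi (Derive psi) x y Hxy) as [z [Ez _]].
    { intros z _. apply is_derive_Reals. apply Derive_correct, Hexpsi. }
    specialize (Hdpsi z). nra. }
  assert (HE1 : forall u, 1 <= exp (c * ln (k u))).
  { intros u. rewrite <- exp_0. apply exp_le'.
    assert (0 <= ln (k u)). { rewrite <- ln_1. apply ln_le'; [lra|]. specialize (Hk u); lra. }
    nra. }
  assert (Hsurj : forall X, {u | psi u = X}).
  { intros X.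
    destruct (IVT_gen_consistent psi (- Rabs X) (Rabs X) X) as [u [_ Hu]].
    - intros x; exact (ex_derive_continuous psi x (Hexpsi x)).
    - split.
      + apply Rle_trans with (psi (- Rabs X)); [apply Rmin_l|].
        unfold psi. specialize (HE1 (- Rabs X)). pose proof (Rabs_pos X).
        pose proof (Rle_abs (- X)). rewrite Rabs_Ropp in *. nra.
      + apply Rle_trans with (psi (Rabs X)); [|apply Rmax_r].
        unfold psi. specialize (HE1 (Rabs X)). pose proof (Rabs_pos X).
        pose proof (Rle_abs X). nra.
    - exists u; exact Hu. }
  pose (pinv := fun X => proj1_sig (Hsurj X)).
  assert (Hpinv : forall X, psi (pinv X) = X) by (intros X; unfold pinv; destruct (Hsurj X); auto).
  assert (HSp : forall n, Sm n pinv) by (apply (inv_smooth psi pinv); auto).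
  exists (fun X => phi (pinv X)). split.
  { exists 1. split; [lra|]. intros n x _. apply Sm_ex. apply Sm_comp; auto. }
  intros X _.
  set (u := pinv X). set (s := phi u).
  assert (Hspos : 0 < s) by apply exp_pos.
  assert (HXs : X * s = u).
  { rewrite <- (Hpinv X). fold u. unfold psi, s, phi.
    rewrite Rmult_assoc, <- exp_plus.
    replace (c * ln (k u) + - c * ln (k u)) with 0 by ring. rewrite exp_0; ring. }
  assert (HP : s ^ (2 * m - 1) * k u = 1).
  { rewrite <- Rpower_pow by auto.
    unfold s, phi. change (exp (- c * ln (k u))) with (Rpower (k u) (- c)).
    rewrite Rpower_mult. rewrite minus_INR by lia. rewrite mult_INR. change (INR m) with M.
    replace (- c * (INR 2 * M - INR 1)) with (- (1)) by (unfold c; simpl; field; lra).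
    rewrite Rpower_Ropp, Rpower_1 by auto. field. specialize (Hkp u); lra. }
  split.
  - apply is_derive_unique. unfold pfun, ghat. fold G. auto_derive.
    + apply (proj1 (HSgt 1%nat)).
    + change (Derive (fun x => gt x)) with (Derive gt).
      replace (Init.Nat.pred (m + (m + 0))) with (2 * m - 1)%nat by lia.
      replace (m + (m + 0))%nat with (S (2 * m - 1)) by lia.
      change (s ^ S (2 * m - 1)) with (s * s ^ (2 * m - 1)).
      rewrite S_INR, minus_INR, mult_INR by lia. change (INR m) with M.
      set (P := s ^ (2 * m - 1)) in *.
      transitivity (P * k u - 1); [| rewrite HP; ring].
      unfold k. rewrite <- HXs. simpl. field. lra.
  - unfold alpha0, alpha1, Rpower. change (INR m) with M. fold c.
    unfold s, phi. specialize (Hk u). pose proof (Hkp u).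
    assert (ln (k u) <= ln (2 * M)) by (apply ln_le'; lra).
    assert (ln (4 / 5 * (2 * M)) <= ln (k u)) by (apply ln_le'; lra).
    split; apply exp_le'; nra.
Qed.
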